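(* For all polynomials $f,g\in F[t]$ and all $a,b\in F$, $$\int_a^b (f*_\psi\partial_\psi g)(t)\,d_\psi t=(f*_\psi g)(b)-(f*_\psi g)(a)-\int_a^b\bigl((Df)*_\psi g\bigr)(t)\,d_\psi t,$$ where $D$ is the ordinary derivative.
   Context: Let $F=\mathbb R$ or $\mathbb C$ and $\psi=(\psi_n)_{n\ge0}$ a sequence in $F$ with all $\psi_n\neq0$; put $n_\psi:=\psi_{n-1}/\psi_n$ ($n\ge1$). On $F[t]$ define linear operators $\partial_\psi1=0$, $\partial_\psi t^n=n_\psi t^{n-1}$ ($n\ge1$), $\hat t_\psi t^n=\frac{n+1}{(n+1)_\psi}t^{n+1}$ ($n\ge0$). For $f=\sum_j a_jt^j$ and $g\in F[t]$ set $f*_\psi g:=\sum_j a_j\hat t_\psi^{\,j}g$. The $\psi$-antiderivative is the linear operator $\int_\psi t^n=\frac{1}{(n+1)_\psi}t^{n+1}$, and $\int_a^b h(t)\,d_\psi t:=H(b)-H(a)$ with $H=\int_\psi h$. *)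

(* Defs.v *)
(* F = R or C is generalised to an arbitrary numFieldType
   (which includes both; the statement is purely algebraic). *)
From HB Require Import structures.
From mathcomp Require Import all_boot all_order all_algebra.
Set Implicit Arguments. Unset Strict Implicit. Unset Printing Implicit Defensive.
Import Order.TTheory GRing.Theory Num.Theory.
Local Open Scope ring_scope.

Section PsiCalc.
Variables (F : numFieldType) (psi : nat -> F).

(* n_psi := psi_{n-1} / psi_n  (used for n >= 1) *)
Definition npsi (n : nat) : F := psi n.-1 / psi n.

(* partial_psi : 1 |-> 0, t^n |-> n_psi t^(n-1), extended linearly *)
Definition dpsi (p : {poly F}) : {poly F} :=
  \poly_(i < (size p).-1) (p`_i.+1 * npsi i.+1).

(* hat t_psi : t^n |-> (n+1)/(n+1)_psi t^(n+1), extended linearly *)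
Definition tpsi (p : {poly F}) : {poly F} :=
  \poly_(i < (size p).+1)
     (if i is j.+1 then p`_j * (j.+1)%:R / npsi j.+1 else 0).

Definition starpsi (f g : {poly F}) : {poly F} :=
  \sum_(j < size f) f`_j *: iter j tpsi g.

(* psi-antiderivative : t^n |-> t^(n+1) / (n+1)_psi *)
Definition ipsi (h : {poly F}) : {poly F} :=
  \poly_(i < (size h).+1)
     (if i is j.+1 then h`_j / npsi j.+1 else 0).

Definition pint (a b : F) (h : {poly F}) : F :=
  (ipsi h).[b] - (ipsi h).[a].

End PsiCalc.

(* Main.v *)
Require Import Defs.
From HB Require Import structures.
From mathcomp Require Import all_boot all_order all_algebra.
Import Order.TTheory GRing.Theory Num.Theory.
Local Open Scope ring_scope.

Section Aux.
Variables (F : numFieldType) (psi : nat -> F).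
Hypothesis hpsi : forall n : nat, psi n != 0.

Lemma npsi_neq0 n : npsi psi n != 0.
Proof. by rewrite /npsi mulf_neq0 ?invr_eq0. Qed.

Lemma coef_dpsi p i : (dpsi psi p)`_i = p`_i.+1 * npsi psi i.+1.
Proof.
rewrite coef_poly; case: ltnP => // H.
by rewrite nth_default ?mul0r // (leq_trans (leqSpred _)) // ltnS.
Qed.

Lemma coef_tpsi p i : (tpsi psi p)`_i =
  if i is j.+1 then p`_j * (j.+1)%:R / npsi psi j.+1 else 0.
Proof.
rewrite coef_poly; case: ltnP => // H; case: i H => // j H.
by rewrite nth_default ?mul0r.
Qed.

Lemma coef_ipsi p i : (ipsi psi p)`_i =
  if i is j.+1 then p`_j / npsi psi j.+1 else 0.
Proof.
rewrite coef_poly; case: ltnP => // H; case: i H => // j H.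
by rewrite nth_default ?mul0r.
Qed.

Lemma dpsiD p q : dpsi psi (p + q) = dpsi psi p + dpsi psi q.
Proof. by apply/polyP => i; rewrite coefD !coef_dpsi coefD mulrDl. Qed.
Lemma dpsi0 : dpsi psi 0 = 0.
Proof. by apply/polyP => i; rewrite coef_dpsi !coef0 mul0r. Qed.
Lemma dpsiZ c p : dpsi psi (c *: p) = c *: dpsi psi p.
Proof. by apply/polyP => i; rewrite coefZ !coef_dpsi coefZ mulrA. Qed.
Lemma dpsiMn p n : dpsi psi (p *+ n) = dpsi psi p *+ n.
Proof. by apply/polyP => i; rewrite coefMn !coef_dpsi coefMn mulrnAl. Qed.

Lemma tpsiD p q : tpsi psi (p + q) = tpsi psi p + tpsi psi q.
Proof.
by apply/polyP => i; rewrite coefD !coef_tpsi; case: i => [|j]; rewrite ?addr0 // coefD !mulrDl.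
Qed.
Lemma tpsiMn p n : tpsi psi (p *+ n) = tpsi psi p *+ n.
Proof.
by apply/polyP => i; rewrite coefMn !coef_tpsi; case: i => [|j]; rewrite ?mul0rn // coefMn !mulrnAl.
Qed.

Lemma ipsiD p q : ipsi psi (p + q) = ipsi psi p + ipsi psi q.
Proof.
by apply/polyP => i; rewrite coefD !coef_ipsi; case: i => [|j]; rewrite ?addr0 // coefD !mulrDl.
Qed.
Lemma ipsiN p : ipsi psi (- p) = - ipsi psi p.
Proof.
by apply/polyP => i; rewrite coefN !coef_ipsi; case: i => [|j]; rewrite ?oppr0 // coefN mulNr.
Qed.

Lemma pintB a b p q : pint psi a b (p - q) = pint psi a b p - pint psi a b q.
Proof.
rewrite /pint ipsiD ipsiN !hornerD !hornerN.
by rewrite !opprD !opprK addrACA.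
Qed.

Lemma ipsi_dpsi p : ipsi psi (dpsi psi p) = p - (p`_0)%:P.
Proof.
apply/polyP => i; rewrite coef_ipsi coefB coefC; case: i => [|j] /=.
  by rewrite subrr.
by rewrite coef_dpsi subr0 mulfK ?npsi_neq0.
Qed.

Lemma pint_dpsi a b p : pint psi a b (dpsi psi p) = p.[b] - p.[a].
Proof.
rewrite /pint ipsi_dpsi !hornerD !hornerN !hornerC.
by rewrite opprD opprK addrACA addNr addr0.
Qed.

Lemma weyl p : dpsi psi (tpsi psi p) = tpsi psi (dpsi psi p) + p.
Proof.
apply/polyP => i; rewrite coefD coef_dpsi !coef_tpsi; case: i => [|j].
  by rewrite mulfVK ?npsi_neq0 // mulr1 add0r.
rewrite coef_dpsi mulfVK ?npsi_neq0 // [in RHS]mulrAC mulfK ?npsi_neq0 //.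
by rewrite !mulr_natr -mulrSr.
Qed.

Lemma dpsi_iter j g : dpsi psi (iter j (tpsi psi) g) =
  iter j (tpsi psi) (dpsi psi g) + iter j.-1 (tpsi psi) g *+ j.
Proof.
elim: j => [|j IH] /=; first by rewrite addr0.
rewrite weyl IH tpsiD.
case: j IH => [|j] IH /=; first by rewrite tpsiMn !mulr0n addr0.
by rewrite tpsiMn -addrA -mulrSr.
Qed.

Lemma starpsiE (f g : {poly F}) n : (size f <= n)%N ->
  starpsi psi f g = \sum_(j < n) f`_j *: iter j (tpsi psi) g.
Proof.
move=> H; rewrite /starpsi (big_ord_widen n (fun j => f`_j *: iter j (tpsi psi) g) H).
rewrite big_mkcond; apply: eq_bigr => i _; case: ltnP => // Hi.
by rewrite nth_default ?scale0r.
Qed.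

End Aux.

Theorem mainTheorem7 (F : numFieldType) (psi : nat -> F)
  (hpsi : forall n : nat, psi n != 0) (f g : {poly F}) (a b : F) :
  pint psi a b (starpsi psi f (dpsi psi g)) =
  (starpsi psi f g).[b] - (starpsi psi f g).[a]
  - pint psi a b (starpsi psi (deriv f) g).
Proof.
set n := size f.
have Hd : (size f^`() <= n)%N.
  by case: (eqVneq f 0) => [->|/lt_size_deriv/ltnW //]; rewrite deriv0 size_poly0.
have key : dpsi psi (starpsi psi f g) =
  starpsi psi f (dpsi psi g) + starpsi psi (deriv f) g.
  rewrite (@starpsiE _ psi f g _ (leqnSn n)) (@starpsiE _ psi f (dpsi psi g) _ (leqnSn n)).
  rewrite (@starpsiE _ psi (deriv f) g _ Hd) -/n.
  rewrite (big_morph (dpsi psi) (@dpsiD _ psi) (@dpsi0 _ psi)).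
  under eq_bigr => j _ do rewrite dpsiZ (@dpsi_iter _ psi hpsi) scalerDr.
  rewrite big_split /=; congr (_ + _).
  rewrite big_ord_recl /= mulr0n scaler0 add0r; apply: eq_bigr => j _.
  by rewrite coef_deriv /bump /= add0n -scalerMnr scalerMnl.
rewrite -(@pint_dpsi _ psi hpsi a b (starpsi psi f g)) key.
by rewrite -pintB addrK.
Qed.
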